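(* Let $y=Dx+w$ as in the context with $x\ne0$, and suppose that $\max_{1\le j\le M}\|D[j]^*w\|_2<\tau$ for some $\tau>0$. If $$(1-(d-1)\nu)x_{\max}>2\tau+(2s-1)d\mu_Bx_{\max},$$ then $\max_{j\in S}\|D[j]^*y\|_2>\max_{j\notin S}\|D[j]^*y\|_2$. If instead the stronger condition $$(1-(d-1)\nu)x_{\min}>2\tau+(2s-1)d\mu_Bx_{\max}$$ holds, then $\min_{j\in S}\|D[j]^*y\|_2>\max_{j\notin S}\|D[j]^*y\|_2$.
   Context: Setting: $N=Md$. For $v\in\mathbb{C}^N$, $v[i]=(v_{(i-1)d+1},\dots,v_{id})^T$ is its $i$-th block ($1\le i\le M$); for a matrix $A$ with $N$ columns, $A[i]$ is the submatrix of columns $(i-1)d+1,\dots,id$. The block support is $\mathrm{supp}(v)=\{i:v[i]\ne0\}$. $x\in\mathbb{C}^N$, $S=\mathrm{supp}(x)$, $s=|S|$, $x_{\max}=\max_{i\in S}\|x[i]\|_2$, $x_{\min}=\min_{i\in S}\|x[i]\|_2$. $D\in\mathbb{C}^{L\times N}$ has columns $d_1,\dots,d_N$ with $\|d_i\|_2=1$; $w\in\mathbb{C}^L$ arbitrary. Block coherence $\mu_B=\max_{i\ne j}\frac1d\|D[i]^*D[j]\|$ (spectral norm); sub-coherence $\nu=\max_{1\le\ell\le M}\max_{(\ell-1)d+1\le i\ne j\le\ell d}|d_i^*d_j|$. *)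

(* Defs.v *)
(* Complex numbers are modelled by an arbitrary
   numClosedFieldType C (e.g. algC). *)
From HB Require Import structures.
From mathcomp Require Import all_boot all_order all_algebra.
Set Implicit Arguments. Unset Strict Implicit. Unset Printing Implicit Defensive.
Import Order.TTheory GRing.Theory Num.Theory.
Local Open Scope ring_scope.

Section BlockDefs.
Variable C : numClosedFieldType.

Definition norm2 (n : nat) (v : 'cV[C]_n) : C :=
  sqrtC (\sum_(k < n) `|v k 0| ^+ 2).

Definition adjmx (m n : nat) (A : 'M[C]_(m, n)) : 'M[C]_(n, m) :=
  (map_mx Num.conj A)^T.

Definition is_spec_norm (m n : nat) (A : 'M[C]_(m, n)) (c : C) : Prop :=
  (forall v : 'cV[C]_n, norm2 (A *m v) <= c * norm2 v) /\
  (forall c' : C, (forall v : 'cV[C]_n, norm2 (A *m v) <= c' * norm2 v) -> c <= c').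

(* 0-based block indexing: entry k (< d) of block i (< M) is index i*d+k *)
Lemma blk_index_lt (M d : nat) (i : 'I_M) (k : 'I_d) : (i * d + k < M * d)%N.
Proof.
case: i => i /= Hi; case: k => k /= Hk.
have H1 : (i * d + k < i * d + d)%N by rewrite ltn_add2l.
apply: (leq_trans H1). by rewrite -mulSnr leq_mul2r Hi orbT.
Qed.

Definition blk_index (M d : nat) (i : 'I_M) (k : 'I_d) : 'I_(M * d) :=
  Ordinal (blk_index_lt i k).

Definition vblk (M d : nat) (v : 'cV[C]_(M * d)) (i : 'I_M) : 'cV[C]_d :=
  \col_(k < d) v (blk_index i k) 0.

Definition mblk (L M d : nat) (A : 'M[C]_(L, M * d)) (i : 'I_M) : 'M[C]_(L, d) :=
  \matrix_(r < L, k < d) A r (blk_index i k).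

Definition bsupp (M d : nat) (v : 'cV[C]_(M * d)) : {set 'I_M} :=
  [set i | vblk v i != 0].

(* max / min of real values F i over a finite set A; max over the empty set
   is 0, and the min uses the max as neutral element, so that for nonempty A
   it is the genuine minimum. *)
Definition setmax (I : finType) (A : {set I}) (F : I -> C) : C :=
  \big[Num.max/0]_(i in A) F i.
Definition setmin (I : finType) (A : {set I}) (F : I -> C) : C :=
  \big[Num.min/setmax A F]_(i in A) F i.

Definition xmax (M d : nat) (x : 'cV[C]_(M * d)) : C :=
  setmax (bsupp x) (fun i => norm2 (vblk x i)).
Definition xmin (M d : nat) (x : 'cV[C]_(M * d)) : C :=
  setmin (bsupp x) (fun i => norm2 (vblk x i)).

Definition is_block_coherence (L M d : nat) (A : 'M[C]_(L, M * d)) (mu : C) : Prop :=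
  exists2 f : 'I_M -> 'I_M -> C,
    (forall i j, i != j -> is_spec_norm (adjmx (mblk A i) *m mblk A j) (f i j)) &
    mu = \big[Num.max/0]_(i < M) \big[Num.max/0]_(j < M | i != j) (f i j / d%:R).

Definition subcoherence (L M d : nat) (A : 'M[C]_(L, M * d)) : C :=
  \big[Num.max/0]_(l < M) \big[Num.max/0]_(a < d) \big[Num.max/0]_(b < d | a != b)
    `|(adjmx (col (blk_index l a) A) *m col (blk_index l b) A) 0 0|.

End BlockDefs.

(* Main.v *)
Require Import Defs.
From HB Require Import structures.
From mathcomp Require Import all_boot all_order all_algebra.
Import Order.TTheory GRing.Theory Num.Theory.
Set Implicit Arguments. Unset Strict Implicit. Unset Printing Implicit Defensive.
Local Open Scope ring_scope.

Definition ss {C : numClosedFieldType} (n : nat) (v : 'cV[C]_n) : C :=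
  \sum_(k < n) `|v k 0| ^+ 2.

Lemma ss_ge0 {C : numClosedFieldType} n (v : 'cV[C]_n) : 0 <= ss v.
Proof. by apply: sumr_ge0 => k _; rewrite exprn_ge0. Qed.

Lemma norm2_ge0 {C : numClosedFieldType} n (v : 'cV[C]_n) : 0 <= norm2 v.
Proof. by rewrite /norm2 sqrtC_ge0 ss_ge0. Qed.

Lemma norm2_sq {C : numClosedFieldType} n (v : 'cV[C]_n) : norm2 v ^+ 2 = ss v.
Proof. by rewrite /norm2 sqrtCK. Qed.

Lemma le_sq {C : numClosedFieldType} (p q : C) :
  0 <= p -> 0 <= q -> p ^+ 2 <= q ^+ 2 -> p <= q.
Proof. by move=> hp hq; rewrite ler_pXn2r // nnegrE. Qed.

Lemma norm2_le {C : numClosedFieldType} n (v : 'cV[C]_n) q :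
  0 <= q -> ss v <= q ^+ 2 -> norm2 v <= q.
Proof. by move=> hq h; apply: le_sq => //; rewrite ?norm2_ge0 ?norm2_sq. Qed.

Lemma amgm {C : numClosedFieldType} (a b : C) :
  0 <= a -> 0 <= b -> a * b *+ 2 <= a ^+ 2 + b ^+ 2.
Proof.
move=> ha hb.
have : 0 <= (a - b) ^+ 2 by rewrite -realEsqr realB // ger0_real.
by rewrite sqrrB addrAC subr_ge0.
Qed.

Lemma cs {C : numClosedFieldType} (I : finType) (P : pred I) (a b : I -> C) :
  (forall i, 0 <= a i) -> (forall i, 0 <= b i) ->
  (\sum_(i | P i) a i * b i) ^+ 2 <=
  (\sum_(i | P i) a i ^+ 2) * (\sum_(i | P i) b i ^+ 2).
Proof.
move=> ha hb.
rewrite expr2 mulr_suml; under eq_bigr do rewrite mulr_sumr.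
rewrite mulr_suml; under [X in _ <= X]eq_bigr do rewrite mulr_sumr.
rewrite -(ler_pMn2r (n:=2)) //.
rewrite !mulr2n [X in _ <= _ + X]exchange_big /= -!big_split /=.
apply: ler_sum => i Pi; rewrite -!big_split /=; apply: ler_sum => j Pj.
rewrite -mulr2n.
have := amgm (mulr_ge0 (ha i) (hb j)) (mulr_ge0 (ha j) (hb i)).
rewrite !exprMn.
have -> : a i * b j * (a j * b i) = a i * b i * (a j * b j).
  by rewrite mulrACA [RHS]mulrACA (mulrC (b j)).
by [].
Qed.

Lemma sum_prod_le {C : numClosedFieldType} n (u v : 'cV[C]_n) :
  \sum_(k < n) `|u k 0| * `|v k 0| <= norm2 u * norm2 v.
Proof.
apply: le_sq; rewrite ?mulr_ge0 ?norm2_ge0 //.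
  by apply: sumr_ge0 => k _; rewrite mulr_ge0.
rewrite exprMn !norm2_sq; exact: cs.
Qed.

Lemma norm2D {C : numClosedFieldType} n (u v : 'cV[C]_n) :
  norm2 (u + v) <= norm2 u + norm2 v.
Proof.
apply: norm2_le; first by rewrite addr_ge0 ?norm2_ge0.
apply: (@le_trans _ _ (\sum_(k < n) (`|u k 0| + `|v k 0|) ^+ 2)).
  apply: ler_sum => k _; rewrite mxE ler_pXn2r ?nnegrE ?addr_ge0 //.
  exact: ler_normD.
under eq_bigr do rewrite sqrrD mulr2n.
rewrite !big_split /= sqrrD mulr2n !norm2_sq.
by rewrite lerD2r lerD2l lerD // sum_prod_le.
Qed.

Lemma norm2N {C : numClosedFieldType} n (u : 'cV[C]_n) : norm2 (- u) = norm2 u.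
Proof. by rewrite /norm2; congr sqrtC; apply: eq_bigr => k _; rewrite mxE normrN. Qed.

Lemma norm2_0 {C : numClosedFieldType} n : norm2 (0 : 'cV[C]_n) = 0.
Proof.
rewrite /norm2 big1 ?sqrtC0 // => k _; by rewrite mxE normr0 expr0n.
Qed.

Lemma norm2_sum {C : numClosedFieldType} n (I : finType) (P : pred I) (F : I -> 'cV[C]_n) :
  norm2 (\sum_(i | P i) F i) <= \sum_(i | P i) norm2 (F i).
Proof.
apply: (big_ind2 (fun x y => norm2 x <= y)) => //.
- by rewrite norm2_0.
- move=> x1 x2 y1 y2 h1 h2; apply: le_trans (norm2D _ _) _; exact: lerD.
Qed.

Lemma norm2_rev {C : numClosedFieldType} n (u v : 'cV[C]_n) :
  norm2 u - norm2 v <= norm2 (u + v).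
Proof.
rewrite lerBlDr; have := norm2D (u + v) (- v).
by rewrite addrK norm2N.
Qed.

Lemma offdiag_bound {C : numClosedFieldType} d (E : 'M[C]_d) (v : 'cV[C]_d) (nu : C) :
  (forall a, E a a = 0) -> (forall a b, a != b -> `|E a b| <= nu) -> 0 <= nu ->
  norm2 (E *m v) <= (d.-1)%:R * nu * norm2 v.
Proof.
case: d E v => [|d] E v Ed Eb nu0.
  by rewrite /norm2 !big_ord0 sqrtC0 mulr0.
apply: norm2_le; first by rewrite !mulr_ge0 ?norm2_ge0 ?ler0n.
set f := fun b : 'I_d.+1 => (`|v b 0| : C).
have h1 : forall a, `|(E *m v) a 0| <= nu * \sum_(b | b != a) f b.
  move=> a; rewrite mxE (bigD1 a) //= Ed mul0r add0r mulr_sumr.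
  apply: le_trans (ler_norm_sum _ _ _) _; apply: ler_sum => b hb.
  by rewrite normrM ler_wpM2r // Eb // eq_sym.
have h2 : forall a, (\sum_(b | b != a) f b) ^+ 2 <= (d%:R) * \sum_(b | b != a) f b ^+ 2.
  move=> a; have := @cs C _ (fun b => b != a) f (fun _ => 1) (fun b => normr_ge0 _) (fun _ => ler01).
  under eq_bigr do rewrite mulr1.
  under [X in _ <= _ * X]eq_bigr do rewrite expr1n.
  rewrite sumr_const.
  have -> : #|(fun i : 'I_d.+1 => i != a)| = d by have := cardC1 a; rewrite card_ord.
  by rewrite mulrC.
have h3 : forall a, \sum_(b | b != a) f b ^+ 2 = ss v - f a ^+ 2.
  by move=> a; rewrite /ss [in RHS](bigD1 a) //= addrC addrK.
apply: (@le_trans _ _ (\sum_a nu ^+ 2 * (d%:R * \sum_(b | b != a) f b ^+ 2))).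
  apply: ler_sum => a _.
  apply: (@le_trans _ _ ((nu * \sum_(b | b != a) f b) ^+ 2)).
    rewrite ler_pXn2r ?nnegrE ?normr_ge0 ?h1 //.
    by apply: mulr_ge0 => //; apply: sumr_ge0 => b _; apply: normr_ge0.
  by rewrite exprMn ler_wpM2l ?exprn_ge0 ?h2.
rewrite -mulr_sumr -mulr_sumr.
under eq_bigr do rewrite h3.
rewrite sumrB sumr_const card_ord mulrSr addrK /= !exprMn norm2_sq.
rewrite -mulr_natl le_eqVlt; apply/orP; left; apply/eqP.
by rewrite !mulr1 -[ss v *+ d]mulr_natl (mulrA (d%:R)) -expr2 mulrA (mulrC (nu ^+ 2)).
Qed.

Lemma blk_dpos M d (k : 'I_(M * d)) : (0 < d)%N.
Proof. by case: k => k; case: d => [|d] //; rewrite muln0. Qed.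

Lemma blk_divlt M d (k : 'I_(M * d)) : (k %/ d < M)%N.
Proof. by rewrite ltn_divLR ?(blk_dpos k). Qed.

Lemma blk_modlt M d (k : 'I_(M * d)) : (k %% d < d)%N.
Proof. by rewrite ltn_pmod ?(blk_dpos k). Qed.

Lemma blk_reindex {C : numClosedFieldType} M d (F : 'I_(M * d) -> C) :
  \sum_k F k = \sum_(i < M) \sum_(k < d) F (blk_index i k).
Proof.
rewrite pair_big /=.
rewrite (reindex (fun p : 'I_M * 'I_d => blk_index p.1 p.2)) //=.
exists (fun k : 'I_(M * d) => (Ordinal (blk_divlt k), Ordinal (blk_modlt k))).
- move=> [i k] _ /=.
  have dp : (0 < d)%N := leq_ltn_trans (leq0n k) (ltn_ord k).
  congr (_, _); apply: val_inj => /=.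
    by rewrite divnMDl // divn_small ?addn0.
  by rewrite modnMDl modn_small.
- by move=> k _; apply: val_inj => /=; rewrite -divn_eq.
Qed.

Lemma blk_mul {C : numClosedFieldType} L M d (D : 'M[C]_(L, M * d)) (x : 'cV[C]_(M * d)) :
  D *m x = \sum_(i < M) mblk D i *m vblk x i.
Proof.
apply/colP => r; rewrite mxE summxE blk_reindex.
by apply: eq_bigr => i _; rewrite mxE; apply: eq_bigr => k _; rewrite !mxE.
Qed.

Lemma max_ge_l {C : numClosedFieldType} (x y : C) : x <= Num.max x y.
Proof. by rewrite /Order.max; case: ifP => // /ltW. Qed.

Lemma max_closed {C : numClosedFieldType} (P : C -> Prop) (x y : C) :
  P x -> P y -> P (Num.max x y).
Proof. by rewrite /Order.max; case: ifP. Qed.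

Lemma min_closed {C : numClosedFieldType} (P : C -> Prop) (x y : C) :
  P x -> P y -> P (Num.min x y).
Proof. by rewrite /Order.min; case: ifP. Qed.

Lemma min_le_l {C : numClosedFieldType} (x y : C) :
  0 <= x -> 0 <= y -> Num.min x y <= x.
Proof.
move=> hx hy; rewrite /Order.min; case: ifP => // h.
by move/negbT: h; rewrite real_ltNge ?ger0_real // negbK.
Qed.

Lemma max_ge_r {C : numClosedFieldType} (x y : C) :
  0 <= x -> 0 <= y -> y <= Num.max x y.
Proof.
move=> hx hy; rewrite /Order.max; case: ifP => // h.
by move/negbT: h; rewrite real_ltNge ?ger0_real // negbK.
Qed.

Lemma min_le_r {C : numClosedFieldType} (x y : C) :
  0 <= x -> 0 <= y -> Num.min x y <= y.
Proof. by move=> hx hy; rewrite /Order.min; case: ifP => // /ltW. Qed.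

Lemma bigmax_ge_seq {C : numClosedFieldType} (I : eqType) (r : seq I) (P : pred I) (F : I -> C) i :
  (forall j, P j -> 0 <= F j) -> i \in r -> P i -> F i <= \big[Num.max/0]_(j <- r | P j) F j.
Proof.
move=> h0; elim: r => [|a r IH] //=; rewrite inE big_cons => /orP [/eqP <-|ir] Pi.
  by rewrite Pi max_ge_l.
have hr : 0 <= \big[Num.max/0]_(j <- r | P j) F j.
  by apply: (big_ind (fun x => 0 <= x)) => //; apply: max_closed.
case: ifP => Pa; last exact: IH.
by apply: le_trans (IH ir Pi) _; apply: max_ge_r => //; apply: h0.
Qed.

Lemma bigmax_ge {C : numClosedFieldType} (I : finType) (P : pred I) (F : I -> C) i :
  (forall j, P j -> 0 <= F j) -> P i -> F i <= \big[Num.max/0]_(j | P j) F j.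
Proof. by move=> h0 Pi; apply: bigmax_ge_seq => //; rewrite mem_index_enum. Qed.

Lemma bigmin_le_seq {C : numClosedFieldType} (I : eqType) (r : seq I) (P : pred I) (F : I -> C) (b : C) i :
  0 <= b -> (forall j, P j -> 0 <= F j) -> i \in r -> P i -> \big[Num.min/b]_(j <- r | P j) F j <= F i.
Proof.
move=> b0 h0; elim: r => [|a r IH] //=; rewrite inE big_cons => /orP [/eqP <-|ir] Pi.
  rewrite Pi; apply: min_le_l; first exact: h0.
  by apply: (big_ind (fun x => 0 <= x)) => //; apply: min_closed.
have hr : 0 <= \big[Num.min/b]_(j <- r | P j) F j.
  by apply: (big_ind (fun x => 0 <= x)) => //; apply: min_closed.
case: ifP => Pa; last exact: IH.
by apply: le_trans (IH ir Pi); apply: min_le_r => //; apply: h0.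
Qed.

Lemma bigmax_ub {C : numClosedFieldType} (I : finType) (P : pred I) (F : I -> C) (B : C) :
  0 <= B -> (forall i, P i -> F i <= B) -> \big[Num.max/0]_(j | P j) F j <= B.
Proof. by move=> B0 h; apply: (big_ind (fun x => x <= B)) => //; apply: max_closed. Qed.

Lemma bigmax_ge0 {C : numClosedFieldType} (I : finType) (P : pred I) (F : I -> C) :
  (forall i, P i -> 0 <= F i) -> 0 <= \big[Num.max/0]_(j | P j) F j.
Proof. by move=> h; apply: (big_ind (fun x => 0 <= x)) => //; apply: max_closed. Qed.

Lemma nu_ge0 {C : numClosedFieldType} L M d (D : 'M[C]_(L, M * d)) : 0 <= subcoherence D.
Proof.
apply: bigmax_ge0 => l _; apply: bigmax_ge0 => a _; apply: bigmax_ge0 => b _.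
exact: normr_ge0.
Qed.

Lemma nu_ge {C : numClosedFieldType} L M d (D : 'M[C]_(L, M * d)) l a b :
  a != b ->
  `|(adjmx (col (blk_index l a) D) *m col (blk_index l b) D) 0 0| <= subcoherence D.
Proof.
move=> hab.
have h3 := @bigmax_ge C _ (fun b => a != b)
  (fun b => `|(adjmx (col (blk_index l a) D) *m col (blk_index l b) D) 0 0|) b
  (fun _ _ => normr_ge0 _) hab.
apply: le_trans h3 _.
have h2 := @bigmax_ge C _ xpredT
  (fun a => \big[Num.max/0]_(b < d | a != b)
     `|(adjmx (col (blk_index l a) D) *m col (blk_index l b) D) 0 0|) a
  (fun a _ => bigmax_ge0 (fun _ _ => normr_ge0 _)) isT.
apply: le_trans h2 _.
apply: (@bigmax_ge C _ xpredT _ l) => // l' _.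
by apply: bigmax_ge0 => a' _; apply: bigmax_ge0 => b' _; apply: normr_ge0.
Qed.

Lemma gram_lb {C : numClosedFieldType} L M d (D : 'M[C]_(L, M * d)) j (v : 'cV[C]_d) :
  (forall c, norm2 (col c D) = 1) ->
  (1 - (d%:R - 1) * subcoherence D) * norm2 v <=
    norm2 (adjmx (mblk D j) *m mblk D j *m v).
Proof.
case: d D j v => [|d] D j v hc.
  by rewrite {1}/norm2 big_ord0 sqrtC0 mulr0 norm2_ge0.
set nu := subcoherence D; set G := adjmx _ *m _.
have GE : forall a b, G a b = (adjmx (col (blk_index j a) D) *m col (blk_index j b) D) 0 0.
  by move=> a b; rewrite !mxE; apply: eq_bigr => r _; rewrite !mxE.
have Gd : forall a, G a a = 1.
  move=> a; have := hc (blk_index j a).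
  move/(congr1 (fun z => z ^+ 2)); rewrite norm2_sq expr1n /ss => <-.
  by rewrite GE mxE; apply: eq_bigr => r _; rewrite !mxE normCK mulrC.
clearbody G.
set E := G - 1%:M.
have -> : G *m v = v + E *m v by rewrite /E mulmxBl mul1mx addrC subrK.
apply: le_trans (norm2_rev _ (E *m v)).
have hE := @offdiag_bound C _ E v nu _ _ (nu_ge0 D).
rewrite -natr1 addrK mulrBl mul1r lerD2l lerN2.
apply: hE.
  by move=> a; rewrite /E !mxE eqxx Gd mulr1n subrr.
by move=> a b hab; rewrite /E !mxE (negbTE hab) mulr0n subr0 GE; apply: nu_ge.
Qed.

Lemma arith {C : numClosedFieldType} (KX s m T tau : C) :
  2 * tau + (2 * s - 1) * m < KX -> T < tau -> s * m + T < KX - (s - 1) * m - T.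
Proof.
move=> H hT; rewrite ltrBrDr ltrBrDr; apply: le_lt_trans H.
have -> : 2 * s - 1 = s + (s - 1) by rewrite mulr_natl mulr2n addrA.
rewrite [(s + (s - 1)) * m]mulrDl [2 * tau]mulr_natl mulr2n.
have -> : s * m + T + T + (s - 1) * m = (T + T) + (s * m + (s - 1) * m).
  by rewrite -addrA (addrC (s * m)) addrACA.
by rewrite lerD2r lerD // ltW.
Qed.

Lemma maxcase {C : numClosedFieldType} (I : finType) (P : pred I) (F : I -> C) :
  \big[Num.max/0]_(i | P i) F i = 0 \/ exists2 i, P i & \big[Num.max/0]_(i | P i) F i = F i.
Proof.
apply: (big_ind (fun v => v = 0 \/ exists2 i, P i & v = F i)); first by left.
  by move=> a b ha hb; rewrite /Order.max; case: ifP.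
by move=> i Pi; right; exists i.
Qed.

Lemma y_decomp {C : numClosedFieldType} L M d (D : 'M[C]_(L, M * d)) (x : 'cV[C]_(M * d))
  (w : 'cV[C]_L) j :
  adjmx (mblk D j) *m (D *m x + w) =
  \sum_(i in bsupp x) (adjmx (mblk D j) *m mblk D i) *m vblk x i + adjmx (mblk D j) *m w.
Proof.
rewrite mulmxDr blk_mul mulmx_sumr (bigID (fun i => i \in bsupp x)) /=.
rewrite [X in _ + X + _ = _]big1 ?addr0; last first.
  by move=> i; rewrite inE negbK => /eqP ->; rewrite !mulmx0.
by congr (_ + _); apply: eq_bigr => i _; rewrite mulmxA.
Qed.

Unset Implicit Arguments.
Set Strict Implicit.

Theorem lemma2 (C : numClosedFieldType) (L M d : nat)
  (D : 'M[C]_(L, M * d)) (x : 'cV[C]_(M * d)) (w : 'cV[C]_L)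
  (tau muB : C) :
  (forall c : 'I_(M * d), norm2 (col c D) = 1) ->
  x != 0 ->
  is_block_coherence D muB ->
  0 < tau ->
  setmax [set: 'I_M] (fun j => norm2 (adjmx (mblk D j) *m w)) < tau ->
  let y := D *m x + w in
  let S := bsupp x in
  let s := #|S| in
  let nu := subcoherence D in
  ((1 - (d%:R - 1) * nu) * xmax x > 2 * tau + (2 * s%:R - 1) * d%:R * muB * xmax x ->
     setmax S (fun j => norm2 (adjmx (mblk D j) *m y))
       > setmax (~: S) (fun j => norm2 (adjmx (mblk D j) *m y))) /\
  ((1 - (d%:R - 1) * nu) * xmin x > 2 * tau + (2 * s%:R - 1) * d%:R * muB * xmax x ->
     setmin S (fun j => norm2 (adjmx (mblk D j) *m y))
       > setmax (~: S) (fun j => norm2 (adjmx (mblk D j) *m y))).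
Proof.
move=> hc hx [f hf hmuE] htau hT y S s nu.
pose T := setmax [set: 'I_M] (fun j => norm2 (adjmx (mblk D j) *m w)).
have dpos : (0 < d)%N.
  case: (ltnP 0 d) => // hd; case/eqP: hx; apply/colP => k.
  by have := blk_dpos k; rewrite ltnNge hd.
have f0 : forall i j, i != j -> 0 <= f i j.
  move=> i j hij; have := (hf i j hij).1 (const_mx 1).
  have hn : 0 < norm2 (const_mx 1 : 'cV[C]_d).
    rewrite /norm2 sqrtC_gt0; under eq_bigr do rewrite mxE normr1 expr1n.
    by rewrite sumr_const card_ord ltr0n.
  by move/(le_trans (norm2_ge0 _)); rewrite pmulr_lge0.
have dR : (d%:R : C) != 0 by rewrite pnatr_eq0 -lt0n.
have mu0 : 0 <= muB.
  rewrite hmuE; apply: bigmax_ge0 => i _; apply: bigmax_ge0 => j hij.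
  by rewrite divr_ge0 ?ler0n ?f0.
have fmu : forall i j, i != j -> f i j <= d%:R * muB.
  move=> i j hij; rewrite hmuE.
  have h1 := @bigmax_ge C _ (fun j => i != j) (fun j => f i j / d%:R) j
    (fun j hj => divr_ge0 (f0 _ _ hj) (ler0n _ _)) hij.
  have h2 := @bigmax_ge C _ xpredT
    (fun i => \big[Num.max/0]_(j < M | i != j) (f i j / d%:R)) i
    (fun i _ => bigmax_ge0 (fun j hj => divr_ge0 (f0 _ _ hj) (ler0n _ _))) isT.
  have := le_trans h1 h2; rewrite -(ler_pM2l (x := d%:R)) ?ltr0n //.
  by rewrite mulrC divfK.
have nx0 : forall i, 0 <= norm2 (vblk x i) by move=> i; apply: norm2_ge0.
have X0 : 0 <= xmax x by apply: bigmax_ge0.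
have nxX : forall i, i \in S -> norm2 (vblk x i) <= xmax x.
  by move=> i hi; apply: (@bigmax_ge C _ (mem S)).
pose m := d%:R * muB * xmax x.
have m0 : 0 <= m by rewrite /m !mulr_ge0 ?ler0n.
have wT : forall j, norm2 (adjmx (mblk D j) *m w) <= T.
  by move=> j; apply: (@bigmax_ge C _ (mem [set: 'I_M])) => // *; rewrite ?inE ?norm2_ge0.
have T0 : 0 <= T by apply: bigmax_ge0 => i _; apply: norm2_ge0.
have termb : forall i j, i \in S -> i != j ->
    norm2 ((adjmx (mblk D j) *m mblk D i) *m vblk x i) <= m.
  move=> i j hi hij; have hji : j != i by rewrite eq_sym.
  apply: le_trans ((hf j i hji).1 _) _.
  by rewrite /m ler_pM ?f0 ?fmu ?nxX.
have up : forall j, j \notin S -> norm2 (adjmx (mblk D j) *m y) <= s%:R * m + T.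
  move=> j hj; rewrite /y y_decomp.
  apply: le_trans (norm2D _ _) _; apply: lerD; last exact: wT.
  apply: le_trans (norm2_sum _ _) _.
  apply: (@le_trans _ _ (\sum_(i in S) m)).
    apply: ler_sum => i hi; apply: termb => //.
    by apply/eqP => eij; rewrite -eij hi in hj.
  by rewrite sumr_const mulr_natl.
pose K := 1 - (d%:R - 1) * nu.
have low : forall j, j \in S ->
    K * norm2 (vblk x j) - (s%:R - 1) * m - T <= norm2 (adjmx (mblk D j) *m y).
  move=> j hj; rewrite /y y_decomp (bigD1 j) //= -[X in _ <= norm2 X]addrA.
  apply: le_trans (norm2_rev _ _).
  rewrite -addrA -opprD; apply: lerB; first exact: gram_lb.
  apply: le_trans (norm2D _ _) _; apply: lerD; last exact: wT.
  apply: le_trans (norm2_sum _ _) _.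
  apply: (@le_trans _ _ (\sum_(i in S | i != j) m)).
    by apply: ler_sum => i /andP [hi hij]; apply: termb.
  have cnt : \sum_(i in S | i != j) m = m *+ #|S :\ j|.
    by rewrite -sumr_const; apply: eq_bigl => i; rewrite in_setD1 andbC.
  have e : s%:R - 1 = (#|S :\ j|)%:R :> C.
    by rewrite /s (cardsD1 j S) hj add1n -natr1 addrK.
  by rewrite cnt e mulr_natl.
have aj0 : forall j, 0 <= norm2 (adjmx (mblk D j) *m y) by move=> j; apply: norm2_ge0.
have U0 : 0 <= s%:R * m + T by rewrite addr_ge0 // mulr_ge0 ?ler0n.
have upS : setmax (~: S) (fun j => norm2 (adjmx (mblk D j) *m y)) <= s%:R * m + T.
  by apply: bigmax_ub => // j; rewrite inE; apply: up.
have tau2 : 0 < 2 * tau by rewrite mulr_gt0 ?ltr0n.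
have HmE : forall z, 2 * tau + (2 * s%:R - 1) * d%:R * muB * xmax x < z ->
    2 * tau + (2 * s%:R - 1) * m < z by move=> z; rewrite /m !mulrA.
split=> H.
  case: (maxcase (mem S) (fun i => norm2 (vblk x i))) => [X0eq|[j0 hj0 Xeq]].
    move: H; rewrite /xmax /setmax -/S X0eq !mulr0 addr0 => H.
    by move: (lt_trans tau2 H); rewrite ltxx.
  apply: le_lt_trans upS _.
  apply: lt_le_trans (@bigmax_ge C _ (mem S) _ j0 (fun j _ => aj0 j) hj0).
  apply: lt_le_trans (low j0 hj0).
  apply: (arith _ hT); apply: HmE.
  move: H; rewrite /xmax /setmax -/S Xeq //.
have Sne : S != set0.
  apply/negP => /eqP S0; move: H.
  rewrite /xmin /xmax /setmin /setmax -/S S0 !big_set0 !mulr0 addr0 => H.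
  by move: (lt_trans tau2 H); rewrite ltxx.
have spos : (0 < s)%N by rewrite /s card_gt0.
have xmin0 : 0 <= xmin x.
  rewrite /xmin /setmin; apply: (big_ind (fun v => 0 <= v)) => //.
  by apply: min_closed.
have RHS0 : 0 <= 2 * tau + (2 * s%:R - 1) * d%:R * muB * xmax x.
  apply: addr_ge0; first exact: ltW.
  apply: mulr_ge0 => //; apply: mulr_ge0 => //; apply: mulr_ge0; rewrite ?ler0n // subr_ge0.
  by rewrite -natrM ler1n muln_gt0.
have Kmin : 0 < K * xmin x by apply: le_lt_trans H.
have Kpos : 0 < K.
  have xm : 0 < xmin x.
    rewrite lt_def xmin0 andbT; apply/eqP => e; move: Kmin; rewrite e mulr0 ltxx.
    by [].
  by move: Kmin; rewrite pmulr_lgt0.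
have lowS : forall j, j \in S -> s%:R * m + T < norm2 (adjmx (mblk D j) *m y).
  move=> j hj; apply: lt_le_trans (low j hj).
  apply: (@lt_le_trans _ _ (K * xmin x - (s%:R - 1) * m - T)).
    by apply: (arith _ hT); apply: HmE.
  rewrite lerD2r lerD2r ler_pM2l //.
  rewrite /xmin /setmin; apply: bigmin_le_seq => //.
apply: le_lt_trans upS _.
rewrite /setmin; apply: (big_ind (fun v => s%:R * m + T < v)) => //.
  case/set0Pn: Sne => j1 hj1.
  apply: lt_le_trans (lowS j1 hj1) _.
  exact: (@bigmax_ge C _ (mem S) _ j1 (fun j _ => aj0 j) hj1).
by apply: min_closed.
Qed.
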